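(* For any collective choice problem $\mathcal C$ and every $\delta>0$, there exists $\eta_\delta>0$ such that $Q(x,\eta_\delta)\ne\emptyset$ for all $x\in\Upsilon_\delta$.
   Context: Collective choice problem $\mathcal C$: voters $N=\{1,\dots,n\}$ ($n$ odd), agenda setter $A$, compact metrizable policy space $X$, continuous preferences with continuous utilities $u_i$. $y\succ_M x$: a strict majority of voters strictly prefer $y$ to $x$. $\mathcal E$ is the set of Unimprovable policies ($x$ such that no $y$ has $y\succ_A x$ and $y\succ_M x$). For $\delta>0$, $\Upsilon_\delta=\{x\in X:\min_{y\in\mathcal E}u_A(y)\ge u_A(x)+\delta\}$. For $x\in X$, $\eta>0$, $Q(x,\eta)$ is the set of $y\in X$ with $u_A(y)\ge u_A(x)+\eta$ such that some strict majority $S\subseteq N$ has $u_i(y)\ge u_i(x)+\eta$ for all $i\in S$. *)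

(* Defs.v *)
From HB Require Import structures.
From mathcomp Require Import all_boot all_order all_algebra.
From mathcomp Require Import all_classical all_reals all_analysis.
Set Implicit Arguments. Unset Strict Implicit. Unset Printing Implicit Defensive.
Import Order.TTheory GRing.Theory Num.Theory numFieldNormedType.Exports.
Local Open Scope classical_set_scope.
Local Open Scope ring_scope.

(* Voters are 'I_n; voter i has utility u i : X -> R; the agenda setter has uA. *)

Definition maj_pref (R : realType) (X : Type) (n : nat) (u : 'I_n -> X -> R)
    (y x : X) : Prop :=
  exists S : {set 'I_n}, (n < 2 * #|S|)%N /\ (forall i, i \in S -> u i x < u i y).

Definition unimprovable (R : realType) (X : Type) (n : nat) (u : 'I_n -> X -> R)
    (uA : X -> R) : set X :=
  [set x | ~ exists y, uA x < uA y /\ maj_pref u y x].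

(* Upsilon_delta = {x | min_{y in E} uA y >= uA x + delta}  (min read as inf,
   i.e. for all y in E). *)
Definition Upsilon (R : realType) (X : Type) (n : nat) (u : 'I_n -> X -> R)
    (uA : X -> R) (delta : R) : set X :=
  [set x | forall y, unimprovable u uA y -> uA x + delta <= uA y].

Definition Qset (R : realType) (X : Type) (n : nat) (u : 'I_n -> X -> R)
    (uA : X -> R) (x : X) (eta : R) : set X :=
  [set y | uA x + eta <= uA y /\
     exists S : {set 'I_n}, (n < 2 * #|S|)%N /\
       (forall i, i \in S -> u i x + eta <= u i y)].

(* Main.v *)
Require Import Defs.
From HB Require Import structures.
From mathcomp Require Import all_boot all_order all_algebra.
From mathcomp Require Import all_classical all_reals all_analysis.
From mathcomp Require Import lra.
Import Order.TTheory GRing.Theory Num.Theory numFieldNormedType.Exports.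
Local Open Scope classical_set_scope.
Local Open Scope ring_scope.

Lemma fin_min (R : realType) (I : finType) (P : pred I) (g : I -> R) :
  (forall i, P i -> 0 < g i) -> exists e : R, 0 < e /\ forall i, P i -> e <= g i.
Proof.
move=> gpos.
suff: forall s : seq I, exists e : R, 0 < e /\ forall i, i \in s -> P i -> e <= g i.
  by case/(_ (enum I)) => e [e0 he]; exists e; split => // i; apply: he; rewrite mem_enum.
elim=> [|a s [e [e0 he]]]; first by exists 1; split.
exists (Order.min e (if P a then g a else 1)); split.
  rewrite lt_min e0 /=; case: ifP => [Pa|_]; [exact: gpos | exact: ltr01].
move=> i; rewrite inE => /orP [/eqP -> Pa|iS Pi]; rewrite ge_min.
  by rewrite Pa lexx orbT.
by rewrite (he i iS Pi).
Qed.

Theorem lemma7 (R : realType) (X : pseudoMetricType R) (n : nat)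
    (u : 'I_n -> X -> R) (uA : X -> R)
    (hX : hausdorff_space X) (cX : compact [set: X]) (hn : odd n)
    (cu : forall i, continuous (u i)) (cA : continuous uA) :
  forall delta : R, 0 < delta ->
  exists eta : R, 0 < eta /\
    forall x, Upsilon u uA delta x -> Qset u uA x eta !=set0.
Proof.
move=> delta dpos.
apply: contrapT => Hno.
have HB : forall e, 0 < e -> exists x, Upsilon u uA delta x /\ ~ (Qset u uA x e !=set0).
  move=> e e0; apply: contrapT => H; apply: Hno; exists e; split => // x Ux.
  by apply: contrapT => nQ; apply: H; exists x.
pose B e := [set x | Upsilon u uA delta x /\ ~ (Qset u uA x e !=set0)].
have Bmono : forall e1 e2, e1 <= e2 -> B e1 `<=` B e2.
  move=> e1 e2 le x [Ux nQ]; split=> // [[y [h1 [S [hS h2]]]]]; apply: nQ.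
  exists y; split; first by apply: le_trans h1; rewrite lerD2l.
  exists S; split => // i /h2; apply: le_trans; by rewrite lerD2l.
pose F := filter_from [set e : R | 0 < e] B.
have FF : ProperFilter F.
  apply: filter_from_proper; last by move=> e /HB.
  apply: filter_from_filter; first by exists 1; rewrite /= ltr01.
  move=> i j i0 j0; exists (Order.min i j); first by rewrite /= lt_min i0 j0.
  by move=> x Bx; split; apply: Bmono Bx; rewrite ge_min lexx ?orbT.
have FT : F setT by exists 1; rewrite /= ?ltr01.
have [z [_ cz]] := cX F FF FT.
case: (pselect (exists y, uA z < uA y /\ maj_pref u y z)) => [[y [hA [S [hS hu]]]] | nimp].
- pose g i := (u i y - u i z) / 2.
  have gpos : forall i, [pred i | i \in S] i -> 0 < g i.
    by move=> i iS; rewrite /g divr_gt0 // subr_gt0 hu.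
  have [e0 [e0p he0]] := @fin_min R _ [pred i | i \in S] g gpos.
  pose eta := Order.min e0 ((uA y - uA z)/2).
  have etap : 0 < eta by rewrite lt_min e0p divr_gt0 // subr_gt0.
  have nb : nbhs z ([set x | uA x < uA z + (uA y - uA z)/2] `&`
      [set x | forall i, i \in S -> u i x < u i z + g i]).
    apply: filterI.
      by apply: (cvgr_lt _ (cA z)); rewrite ltrDl divr_gt0 // subr_gt0.
    apply: filter_forall => i; case: (boolP (i \in S)) => iS.
      have : u i z < u i z + g i by rewrite ltrDl gpos.
      move/(cvgr_lt _ (cu i z)); apply: filterS => x h _; exact: h.
    by apply: nearW => x.
  have [x [[Ux nQ] [hxA hxu]]] := cz (B eta) _ (ex_intro2 _ _ eta etap (fun _ h => h)) nb.
  apply: nQ; exists y; split.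
    have : eta <= (uA y - uA z)/2 by rewrite ge_min lexx orbT.
    move: hxA => /= hxA; lra.
  exists S; split => // i iS.
  have := hxu i iS; have := he0 i iS; have : eta <= e0 by rewrite ge_min lexx.
  rewrite /g; lra.
- have nb : nbhs z [set x | uA z - delta < uA x].
    apply: (cvgr_gt _ (cA z)); lra.
  have [x [[Ux _] hx]] := cz (B 1) _ (ex_intro2 _ _ 1 ltr01 (fun _ h => h)) nb.
  have := Ux z; rewrite /unimprovable /= => /(_ nimp); move: hx => /= hx; lra.
Qed.
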